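(* Every Gauss sequence is an Euler–Gauss sequence. That is, if $(a_n)_{n\ge1}$ is an integer sequence satisfying $\sum_{d\mid n}\mu(d)\,a_{n/d}\equiv 0 \pmod n$ for all $n\ge1$, then $A_n^+\equiv A_n^-\pmod n$ for all $n\ge 1$.
   Context: $\mu$ is the Möbius function. For an integer sequence $(a_n)_{n\ge1}$ and $n\ge1$, $A_n^+=\prod_{d\mid n,\ \mu(d)=1} a_{n/d}$ and $A_n^-=\prod_{d\mid n,\ \mu(d)=-1} a_{n/d}$ (empty products equal $1$). A Gauss sequence is an integer sequence with $\sum_{d\mid n}\mu(d)a_{n/d}\equiv0\pmod n$ for all $n\ge1$; an Euler–Gauss sequence is an integer sequence with $A_n^+\equiv A_n^-\pmod n$ for all $n\ge1$. *)

(* Defs.v *)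
From mathcomp Require Import all_boot all_order all_algebra.
Set Implicit Arguments. Unset Strict Implicit. Unset Printing Implicit Defensive.
Import GRing.Theory Num.Theory.
Local Open Scope ring_scope.

Definition squarefree (d : nat) : bool :=
  all (fun p => logn p d <= 1)%N (primes d).

Definition moebius (d : nat) : int :=
  if squarefree d then (-1) ^+ size (primes d) else 0.

(* Sequences a_1, a_2, ... are encoded as a : nat -> int; the value a 0 is
   irrelevant (never used). *)

Definition is_gauss (a : nat -> int) : Prop :=
  forall n : nat, (0 < n)%N ->
    (n%:Z %| \sum_(d <- divisors n) moebius d * a (n %/ d)%N)%Z.

Definition Aplus (a : nat -> int) (n : nat) : int :=
  \prod_(d <- divisors n | moebius d == 1) a (n %/ d)%N.

Definition Aminus (a : nat -> int) (n : nat) : int :=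
  \prod_(d <- divisors n | moebius d == -1) a (n %/ d)%N.

Definition is_euler_gauss (a : nat -> int) : Prop :=
  forall n : nat, (0 < n)%N -> (Aplus a n == Aminus a n %[mod n%:Z])%Z.

(* Main.v *)
Require Import Defs.
From mathcomp Require Import all_boot all_order all_algebra.
From mathcomp Require Import ring.
Import GRing.Theory Num.Theory.

Lemma moebius_sq d p : (0 < d)%N -> prime p -> (p ^ 2 %| d)%N -> moebius d = 0%R.
Proof.
move=> d0 pp pd; rewrite /moebius.
have -> : squarefree d = false; last by [].
apply/negbTE/negP => /allP /(_ p).
have pd' : (p %| d)%N by apply: dvdn_trans pd; rewrite dvdn_exp.
rewrite mem_primes pp d0 pd' => /(_ isT).
by rewrite leqNgt -(pfactor_dvdn 2 pp d0) pd.
Qed.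

Lemma moebius_mulp d p : prime p -> (0 < d)%N -> ~~ (p %| d)%N ->
  moebius (p * d) = (- moebius d)%R.
Proof.
move=> pp d0 npd.
have p0 : (0 < p)%N by rewrite prime_gt0.
have pnd : p \notin primes d by rewrite mem_primes pp d0 /= (negbTE npd).
have Pe : perm_eq (primes (p * d)) (p :: primes d).
  apply: uniq_perm; first exact: primes_uniq.
    by rewrite /= pnd primes_uniq.
  move=> q; rewrite primesM // primes_prime // inE.
  by rewrite in_cons.
have Hsq : squarefree (p * d) = squarefree d.
  rewrite /squarefree (perm_all _ Pe) /=.
  rewrite lognM // logn_prime // eqxx logn_coprime ?prime_coprime //= .
  apply: eq_in_all => q qd.
  rewrite lognM // logn_prime //.
  have -> : (q == p) = false.
    by apply/negbTE; apply: contra pnd => /eqP <-.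
  by [].
rewrite /moebius Hsq (perm_size Pe) /=.
case: (squarefree d) => //.
by rewrite exprS mulN1r.
Qed.

Lemma big_div_split (R : Type) (idx : R) (op : Monoid.com_law idx) n p
  (F : nat -> R) :
  (0 < n)%N -> prime p -> (p %| n)%N ->
  (forall d, (d %| n)%N -> (p ^ 2 %| d)%N -> F d = idx) ->
  \big[op/idx]_(d <- divisors n) F d =
  \big[op/idx]_(d <- divisors n | ~~ (p %| d)%N) op (F d) (F (p * d)%N).
Proof.
move=> n0 pp pn H.
have p0 : (0 < p)%N by rewrite prime_gt0.
rewrite big_split /= (bigID (fun d => p %| d)%N) /= Monoid.mulmC.
congr (op _ _).
rewrite [LHS](bigID (fun d => p ^ 2 %| d)%N) /= [X in op X _]big_seq_cond.
rewrite [X in op X _]big1; last first.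
  by move=> d /andP[dr /andP[_ pd]]; apply: H pd; rewrite dvdn_divisors.
rewrite Monoid.mul1m.
rewrite -big_filter -[RHS]big_filter.
have -> : \big[op/idx]_(d <- [seq x <- divisors n | ~~ (p %| x)%N]) F (p * d)%N
   = \big[op/idx]_(d <- map (muln p) [seq x <- divisors n | ~~ (p %| x)%N]) F d
  by rewrite big_map.
apply: perm_big; apply: uniq_perm.
- by rewrite filter_uniq ?divisors_uniq.
- rewrite map_inj_uniq ?filter_uniq ?divisors_uniq //.
  by move=> x y /eqP; rewrite eqn_pmul2l // => /eqP.
move=> e; rewrite mem_filter -!dvdn_divisors //.
apply/idP/mapP.
- case/andP => /andP[pe npe] en.
  exists (e %/ p)%N; last by rewrite mulnC divnK.
  rewrite mem_filter -dvdn_divisors //.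
  have ee : e = (p * (e %/ p))%N by rewrite mulnC divnK.
  apply/andP; split.
    apply: contra npe => h; rewrite ee expnS expn1 dvdn_pmul2l //.
  by apply: dvdn_trans en; rewrite {2}ee dvdn_mull.
- case=> d; rewrite mem_filter -dvdn_divisors // => /andP[npd dn] ->.
  have cpd : coprime p d by rewrite prime_coprime.
  by rewrite Gauss_dvd // pn dn dvdn_mulr //= expnS expn1 dvdn_pmul2l // andbT.
Qed.

Lemma quot_facts n p d : (0 < n)%N -> prime p -> (p %| n)%N -> (d %| n)%N ->
  ~~ (p %| d)%N ->
  [/\ (0 < n %/ d)%N, (p %| n %/ d)%N & logn p (n %/ d) = logn p n].
Proof.
move=> n0 pp pn dn npd.
have d0 : (0 < d)%N := dvdn_gt0 n0 dn.
have q0 : (0 < n %/ d)%N by rewrite divn_gt0 // dvdn_leq.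
have L : logn p (n %/ d) = logn p n.
  by rewrite logn_div // (@logn_coprime p d) ?prime_coprime // subn0.
split => //.
have : (0 < logn p (n %/ d))%N by rewrite L logn_gt0 mem_primes pp n0 pn.
by rewrite logn_gt0 mem_primes => /and3P[].
Qed.

Lemma step1 a : is_gauss a -> forall n, (0 < n)%N -> forall p, prime p ->
  (p %| n)%N -> ((p ^ logn p n)%:Z %| (a n - a (n %/ p)%N)%R)%Z.
Proof.
move=> Ga n; elim/ltn_ind: n => n IH n0 p pp pn.
have p0 : (0 < p)%N by rewrite prime_gt0.
have G := Ga n n0.
rewrite (@big_div_split _ _ _ _ _ _ n0 pp pn) in G; last first.
  move=> d dn pd; rewrite (@moebius_sq _ _ _ pp pd) ?mul0r //; exact: dvdn_gt0 dn.
rewrite big_seq_cond in G.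
rewrite (eq_bigr (fun d => moebius d * (a (n %/ d)%N - a (n %/ d %/ p)%N)))%R in G;
  last first.
  move=> d /andP[dr npd].
  have dn : (d %| n)%N by rewrite dvdn_divisors.
  have d0 : (0 < d)%N := dvdn_gt0 n0 dn.
  by rewrite moebius_mulp // mulnC divnMA mulNr mulrBr.
rewrite -big_seq_cond -big_filter (bigD1_seq 1%N) /= in G; last first.
- by rewrite filter_uniq ?divisors_uniq.
- by rewrite mem_filter divisor1 dvdn1 andbT; apply/eqP => p1; rewrite p1 in pp.
have M1 : moebius 1 = 1%R by [].
rewrite M1 mul1r divn1 in G.
have Hk : ((p ^ logn p n)%:Z %| n%:Z)%Z.
  by rewrite dvdzE /= pfactor_dvdn.
have := dvdz_trans Hk G.
rewrite rpredDr //.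
rewrite big_seq_cond; apply: rpred_sum => d /andP[dr d1].
move: dr; rewrite mem_filter -dvdn_divisors // => /andP[npd dn].
have d0 : (0 < d)%N := dvdn_gt0 n0 dn.
have [q0 pq L] := @quot_facts _ _ _ n0 pp pn dn npd.
apply: dvdz_mull; rewrite -L; apply: IH => //.
by apply: ltn_Pdiv => //; rewrite ltn_neqAle eq_sym d1 d0.
Qed.

Lemma prod_cong (m : int) (r : seq nat) (P : pred nat) (F G : nat -> int) :
  (forall i, P i -> (m %| (F i - G i)%R)%Z) ->
  (m %| (\prod_(i <- r | P i) F i - \prod_(i <- r | P i) G i)%R)%Z.
Proof.
move=> H.
apply: (big_ind2 (fun x y => (m %| (x - y)%R)%Z)) => //.
move=> x1 x2 y1 y2 h1 h2.
have -> : (x1 * y1 - x2 * y2 = x1 * (y1 - y2) + (x1 - x2) * y2)%R by ring.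
by apply: rpredD; [apply: dvdz_mull | apply: dvdz_mulr].
Qed.

Theorem theorem1 (a : nat -> int) : is_gauss a -> is_euler_gauss a.
Proof.
move=> Ga n n0; rewrite eqz_mod_dvd dvdzE; apply/dvdn_partP => // p.
rewrite mem_primes => /and3P[pp _ pn]; rewrite p_part.
suff : ((p ^ logn p n)%:Z %| (Aplus a n - Aminus a n)%R)%Z by [].
have p0 : (0 < p)%N by rewrite prime_gt0.
rewrite /Aplus /Aminus big_mkcond /= [X in (_ - X)%R]big_mkcond /=.
rewrite (@big_div_split _ _ _ _ _ _ n0 pp pn); last first.
  by move=> d dn pd; rewrite (@moebius_sq _ _ _ pp pd) //; exact: dvdn_gt0 dn.
rewrite [X in (_ - X)%R](@big_div_split _ _ _ _ _ _ n0 pp pn); last first.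
  by move=> d dn pd; rewrite (@moebius_sq _ _ _ pp pd) //; exact: dvdn_gt0 dn.
rewrite big_seq_cond [X in (_ - X)%R]big_seq_cond.
apply: prod_cong => d /andP[dr npd].
move: dr; rewrite -dvdn_divisors // => dn.
have d0 : (0 < d)%N := dvdn_gt0 n0 dn.
have [q0 pq L] := @quot_facts _ _ _ n0 pp pn dn npd.
have S := @step1 _ Ga _ q0 _ pp pq; rewrite L -divnMA mulnC in S.
rewrite moebius_mulp // !eqr_oppLR opprK.
case E1: (moebius d == 1%R); case E2: (moebius d == (- 1)%R).
- by rewrite (eqP E1) in E2.
- by rewrite Monoid.mulm1 Monoid.mul1m.
- by rewrite Monoid.mulm1 Monoid.mul1m -opprB rpredN.
- by rewrite subrr dvdz0.
Qed.
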